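(* Suppose that $\langle s_\alpha : \alpha \in S \rangle$ is a disjoint stationary sequence on $\omega_2$. Then $(\omega_2 \cap \mathrm{cof}(\omega_1)) \setminus S$ is stationary in $\omega_2$.
   Context: For an uncountable ordinal $\alpha < \omega_2$, $P_{\omega_1}(\alpha)$ is the set of countable subsets of $\alpha$; a set $c \subseteq P_{\omega_1}(\alpha)$ is club if it is cofinal (under $\subseteq$) and closed under unions of countable increasing sequences, and $s \subseteq P_{\omega_1}(\alpha)$ is stationary if it meets every club in $P_{\omega_1}(\alpha)$. A disjoint stationary sequence on $\omega_2$ is a sequence $\langle s_\alpha : \alpha \in S \rangle$, where $S$ is a stationary subset of $\omega_2 \cap \mathrm{cof}(\omega_1)$, such that each $s_\alpha$ is a stationary subset of $P_{\omega_1}(\alpha)$ and $s_\alpha \cap s_\beta = \emptyset$ for all $\alpha < \beta$ in $S$. *)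

(* Defs.v *)
From HB Require Import structures.
From mathcomp Require Import all_boot all_order.
From mathcomp Require Import boolp classical_sets cardinality.
Set Implicit Arguments. Unset Strict Implicit. Unset Printing Implicit Defensive.
Import Order.TTheory.
Local Open Scope classical_set_scope.
Local Open Scope order_scope.

(* |A| <= aleph_1 : A carries a well-order (of type <= omega_1) all of whose
   proper initial segments are countable. *)
Definition aleph1_small {T : Type} (A : set T) : Prop :=
  exists R : T -> T -> Prop,
    (forall x, A x -> ~ R x x) /\
    (forall x y z, A x -> A y -> A z -> R x y -> R y z -> R x z) /\
    (forall x y, A x -> A y -> x = y \/ R x y \/ R y x) /\
    (forall B : set T, B `<=` A -> B !=set0 ->
        exists2 m, B m & forall y, B y -> ~ R y m) /\
    (forall x, A x -> countable [set y | A y /\ R y x]).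

Section Omega2.
Context {d : Order.disp_t} {T : orderType d}.

(* T is (order-isomorphic to) omega_2: a well-order all of whose proper
   initial segments have size <= aleph_1, but which itself is not of size <= aleph_1. *)
Definition is_omega2 : Prop :=
  [/\ well_founded (fun x y : T => x < y),
      forall a : T, aleph1_small [set b : T | b < a] &
      ~ aleph1_small [set: T]].

Definition segment (a : T) : set T := [set b | b < a].

Definition cofinal_in (a : T) (A : set T) : Prop :=
  A `<=` segment a /\ forall b, b < a -> exists2 c, A c & b <= c.

Definition cof_omega1 (a : T) : Prop :=
  (~ exists A, cofinal_in a A /\ countable A) /\
  (exists A, cofinal_in a A /\ aleph1_small A).

Definition club (C : set T) : Prop :=
  (forall b, exists2 c, C c & b < c) /\
  (forall a, (exists b, b < a) ->
     (forall b, b < a -> exists2 c, C c & b < c /\ c < a) -> C a).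

Definition stationary (X : set T) : Prop :=
  forall C, club C -> X `&` C !=set0.

Definition Pw1 (a : T) : set (set T) :=
  [set x | x `<=` segment a /\ countable x].

Definition club_P (a : T) (c : set (set T)) : Prop :=
  [/\ c `<=` Pw1 a,
      (forall x, Pw1 a x -> exists2 y, c y & x `<=` y) &
      (forall y : nat -> set T, (forall n, c (y n)) ->
          (forall n, y n `<=` y n.+1) -> c (\bigcup_n y n))].

Definition stationary_P (a : T) (s : set (set T)) : Prop :=
  s `<=` Pw1 a /\ forall c, club_P a c -> s `&` c !=set0.

Definition disjoint_stationary_sequence (S : set T) (s : T -> set (set T)) : Prop :=
  [/\ S `<=` cof_omega1, stationary S,
      (forall a, S a -> stationary_P a (s a)) &
      (forall a b, S a -> S b -> a < b -> s a `&` s b = set0)].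

End Omega2.

(* Main.v *)
Require Import Defs.
From HB Require Import structures.
From mathcomp Require Import all_boot all_order.
From mathcomp Require Import boolp classical_sets cardinality.
Set Implicit Arguments. Unset Strict Implicit. Unset Printing Implicit Defensive.
Import Order.TTheory.
Local Open Scope classical_set_scope.
Local Open Scope order_scope.

Lemma cnt_sub {U} (A B : set U) : A `<=` B -> countable B -> countable A.
Proof. by move=> AB; apply: sub_countable; apply: subset_card_le. Qed.

Lemma cnt_U {U} (A B : set U) : countable A -> countable B -> countable (A `|` B).
Proof.
move=> cA cB; apply: (@cnt_sub _ _ (\bigcup_(b in [set: bool]) (if b then A else B))).
  by move=> x [Ax|Bx]; [exists true|exists false].
by apply: bigcup_countable => // -[].
Qed.

Lemma cnt_img {U V} (f : U -> V) (A : set U) : countable A -> countable (f @` A).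
Proof. by apply: sub_countable; apply: card_image_le. Qed.

Lemma cnt_inj {U V} (f : U -> V) (A : set U) (B : set V) :
  (forall x y, A x -> A y -> f x = f y -> x = y) -> (forall x, A x -> B (f x)) ->
  countable B -> countable A.
Proof.
move=> fi fAB /countable_injP [g gi]; apply/countable_injP; exists (g \o f).
move=> x y; rewrite !inE => Ax Ay /= /gi; rewrite !inE => /(_ (fAB _ Ax) (fAB _ Ay)).
exact: fi.
Qed.

Section S.
Context {d : Order.disp_t} {T : orderType d}.
Context (wfT : well_founded (fun x y : T => x < y)).

Lemma wf_min (P : set T) : P !=set0 -> exists m, P m /\ forall y, P y -> m <= y.
Proof.
move=> [x Px]; apply: contrapT => H.
suff : forall z, ~ P z by move/(_ x).
move=> z; elim/(well_founded_ind wfT): z => z IH Pz; apply: H; exists z; split=> // y Py.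
by rewrite leNgt; apply/negP => /IH /(_ Py).
Qed.

Lemma rec_exists (X : Type) (x0 : X) (G : T -> (T -> X) -> X) :
  (forall i h h', (forall j, j < i -> h j = h' j) -> G i h = G i h') ->
  exists f : T -> X, forall i, f i = G i f.
Proof.
move=> HG.
pose F := fun (i : T) (rec : forall j : T, j < i -> X) =>
  G i (fun j => match pselect (j < i) with left p => rec j p | right _ => x0 end).
exists (Fix wfT (fun _ => X) F) => i.
rewrite Fix_eq; last first.
  move=> x f g Hfg; rewrite /F; congr (G x _); apply: funext => j.
  by case: pselect.
rewrite /F; apply: HG => j ji; by case: pselect.
Qed.

Lemma small_lt (A : set T) :
  (forall x, A x -> countable [set y | A y /\ y < x]) -> aleph1_small A.
Proof.
move=> cA; exists (fun x y => x < y); split; first by move=> x _; rewrite ltxx.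
split; first by move=> x y z _ _ _; apply: lt_trans.
split; first by move=> x y _ _; have [h|h|h] := ltgtP x y; auto.
split=> // B _ /wf_min [m [Bm mB]]; exists m => // y /mB; rewrite leNgt => /negP; auto.
Qed.

Lemma exists_w : ~ aleph1_small [set: T] ->
  exists w : T, ~ countable (segment w) /\ forall i, i < w -> countable (segment i).
Proof.
move=> nT.
have [w [w1 w2]] : exists w : T, ~ countable (segment w) /\
   forall y, ~ countable (segment y) -> w <= y.
  apply: (@wf_min (fun w => ~ countable (segment w))); apply: contrapT => H; apply: nT; apply: small_lt => x _.
  apply: contrapT => nc; apply: H; exists x => /=.
  by move: nc; apply: contra_not; apply: cnt_sub => y [].
exists w; split=> // i iw; apply: contrapT => /w2; rewrite leNgt iw //.
Qed.

End S.

Definition ismin {U} (A : set U) (R : U -> U -> Prop) (X : set U) r :=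
  [/\ A r, ~ X r & forall z, A z -> ~ X z -> ~ R z r].

Lemma ismin_uniq {U} (A : set U) R X r1 r2 :
  (forall x y, A x -> A y -> x = y \/ R x y \/ R y x) ->
  ismin A R X r1 -> ismin A R X r2 -> r1 = r2.
Proof.
move=> tot [A1 X1 m1] [A2 X2 m2].
by have [//|[l|l]] := tot r1 r2 A1 A2; [case: (m2 r1 A1 X1)|case: (m1 r2 A2 X2)].
Qed.

Lemma ismin_ex {U} (A : set U) R X :
  (forall B : set U, B `<=` A -> B !=set0 -> exists2 m, B m & forall y, B y -> ~ R y m) ->
  (exists z, A z /\ ~ X z) -> exists r, ismin A R X r.
Proof.
move=> wm [z [Az Xz]].
have [|m [Am Xm] H] := wm [set u | A u /\ ~ X u] _ (ex_intro _ z (conj Az Xz)).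
  by move=> u [].
by exists m; split=> // u Au Xu; apply: H.
Qed.

Section W.
Context {d : Order.disp_t} {T : orderType d}.
Context (wfT : well_founded (fun x y : T => x < y)).
Context (w : T) (hw1 : ~ countable (segment w))
  (hw2 : forall i, i < w -> countable (segment i)).

Lemma cnt_le i : i < w -> countable [set j | j <= i].
Proof.
move=> iw; apply: (@cnt_sub _ _ (segment i `|` [set i])); last first.
  by apply: cnt_U => //; apply: (hw2).
by move=> j /=; rewrite le_eqVlt => /orP [/eqP ->|]; [right|left].
Qed.

Lemma bound_w (A : set T) : A `<=` segment w -> countable A ->
  exists k, k < w /\ forall a, A a -> a < k.
Proof.
move=> Aw cA.
have cB : countable (\bigcup_(a in A) [set j | j <= a]).
  by apply: bigcup_countable => // a /Aw; apply: cnt_le.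
have [k [kw nBk]] : exists k, k < w /\ ~ (\bigcup_(a in A) [set j | j <= a]) k.
  apply: contrapT => H; apply: hw1; apply: cnt_sub cB => k kw.
  by apply: contrapT => nk; apply: H; exists k.
exists k; split=> // a Aa; rewrite ltNge; apply/negP => ka; apply: nBk; by exists a.
Qed.

Lemma nomax i : i < w -> exists k, i < k /\ k < w.
Proof.
move=> iw; have [|//|k [kw Hk]] := @bound_w [set i]; first by move=> x ->.
by exists k; split=> //; apply: Hk.
Qed.

Lemma cover (A : T -> set T) (R : T -> T -> T -> Prop) (y : T -> set T) :
  (forall j x z, j < w -> A j x -> A j z -> x = z \/ R j x z \/ R j z x) ->
  (forall j x, j < w -> A j x -> countable [set u | A j u /\ R j u x]) ->
  (forall i j, i < w -> j <= i ->
     (exists z, A j z /\ ~ (\bigcup_(k in segment i) y k) z) ->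
     exists r, [/\ y i r, A j r, ~ (\bigcup_(k in segment i) y k) r &
        forall z, A j z -> ~ (\bigcup_(k in segment i) y k) z -> ~ R j z r]) ->
  forall j, j < w -> A j `<=` \bigcup_(i in segment w) y i.
Proof.
move=> Rtot Rcnt Hy j jw z Ajz; apply: contrapT => nz.
pose D := [set i | j <= i /\ i < w].
have nX : forall i, D i -> ~ (\bigcup_(k in segment i) y k) z.
  move=> i [_ iw] [k ki ykz]; apply: nz; exists k => //.
  by apply: lt_trans iw.
have : forall i, exists r, D i -> [/\ y i r, A j r, ~ (\bigcup_(k in segment i) y k) r &
        forall z, A j z -> ~ (\bigcup_(k in segment i) y k) z -> ~ R j z r].
  move=> i; case: (pselect (D i)) => Di; last by exists z.
  have [r Hr] := Hy i j (proj2 Di) (proj1 Di) (ex_intro _ z (conj Ajz (nX i Di))).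
  by exists r.
move=> /choice [r Hr].
have cD : countable D.
  apply: (@cnt_inj _ _ r D [set u | A j u /\ R j u z]); last exact: Rcnt.
    move=> i1 i2 D1 D2 e.
    have [l|l|//] := ltgtP i1 i2.
      have [y1 _ _ _] := Hr i1 D1; have [_ _ n2 _] := Hr i2 D2.
      by exfalso; apply: n2; exists i1 => //; rewrite -e.
    have [_ _ n1 _] := Hr i1 D1; have [y2 _ _ _] := Hr i2 D2.
    by exfalso; apply: n1; exists i2 => //; rewrite e.
  move=> i Di; have [yi Ar _ mr] := Hr i Di; split=> //.
  have [e|[//|zr]] := Rtot j (r i) z jw Ar Ajz.
    by exfalso; apply: nz; exists i => //; [exact: (proj2 Di) | rewrite -e].
  by exfalso; apply: (mr z Ajz (nX i Di)).
apply: hw1; apply: (@cnt_sub _ _ (segment j `|` D)); last by apply: cnt_U => //; apply: (hw2).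
move=> i iw; have [l|l|e] := ltgtP i j; [by left|right|right].
  by split=> //; apply: ltW.
by rewrite e; split.
Qed.

Lemma cnt_mins (A : T -> set T) (R : T -> T -> T -> Prop) (X : set T) i :
  i < w -> (forall j x z, j < w -> A j x -> A j z -> x = z \/ R j x z \/ R j z x) ->
  countable [set r | exists j, j <= i /\ ismin (A j) (R j) X r].
Proof.
move=> iw Rtot.
have : forall r, exists j, (exists j, j <= i /\ ismin (A j) (R j) X r) ->
    j <= i /\ ismin (A j) (R j) X r.
  move=> r; case: (pselect (exists j, j <= i /\ ismin (A j) (R j) X r)) => yr.
    by case: yr => j Hj; exists j.
  by exists i.
move=> /choice [jr Hjr].
apply: (@cnt_inj _ _ jr _ [set j | j <= i]); last exact: (cnt_le iw).
  move=> r1 r2 y1 y2 e.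
  have [_ m1] := Hjr r1 y1; have [j2 m2] := Hjr r2 y2.
  rewrite e in m1; apply: (ismin_uniq _ m1 m2).
  move=> x z Ax Az; apply: (Rtot (jr r2) x z) => //.
  by apply: le_lt_trans iw.
by move=> r yr; exact: (proj1 (Hjr r yr)).
Qed.

Lemma small_of_cover (z : T -> set T) :
  (forall i, i < w -> countable (z i)) -> (forall t, exists i, i < w /\ z i t) ->
  aleph1_small [set: T].
Proof.
move=> cz /choice [io Hio].
exists (fun x y => io x < io y \/ (io x = io y /\ x < y)).
split; first by move=> x _ [|[]]; rewrite ltxx.
split.
  move=> x y v _ _ _ [l1|[e1 l1]] [l2|[e2 l2]].
  - by left; apply: lt_trans l2.
  - by left; rewrite -e2.
  - by left; rewrite e1.
  - by right; split; [rewrite e1|apply: lt_trans l2].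
split.
  move=> x y _ _; have [l|l|e] := ltgtP (io x) (io y); [by right; left; left|by right; right; left|].
  have [l|l|e'] := ltgtP x y; [by right; left; right|by right; right; right|by left].
split.
  move=> B _ [b Bb].
  have [i0 [[t0 [Bt0 e0]] mi0]] := @wf_min _ _ wfT [set i | exists t, B t /\ io t = i]
     (ex_intro _ (io b) (ex_intro _ b (conj Bb erefl))).
  have [m [[Bm em] mm]] := @wf_min _ _ wfT [set t | B t /\ io t = i0]
     (ex_intro _ t0 (conj Bt0 e0)).
  exists m => // u Bu [l|[e l]].
    by move: (mi0 (io u) (ex_intro _ u (conj Bu erefl))); rewrite -em leNgt l.
  by move: (mm u (conj Bu (etrans e em))); rewrite leNgt l.
move=> x _; apply: (@cnt_sub _ _ (\bigcup_(i in [set i | i <= io x]) z i)).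
  move=> u [_ Ru]; exists (io u); last exact: (proj2 (Hio u)).
  by case: Ru => [l|[e _]]; [apply: ltW|rewrite /= e].
apply: bigcup_countable; first by apply: cnt_le; exact: (proj1 (Hio x)).
move=> i /= il; apply: cz; apply: le_lt_trans il (proj1 (Hio x)).
Qed.

End W.

Section B.
Context {d : Order.disp_t} {T : orderType d}.
Context (wfT : well_founded (fun x y : T => x < y)).
Context (segsmall : forall a : T, aleph1_small (segment a)).
Context (nT : ~ aleph1_small [set: T]).
Context (w : T) (hw1 : ~ countable (segment w))
  (hw2 : forall i, i < w -> countable (segment i)).

Lemma bound (h : T -> T) : exists b, forall j, j < w -> h j < b.
Proof.
apply: contrapT => nb.
have hb : forall b, exists j, j < w /\ b <= h j.
  move=> b; apply: contrapT => H; apply: nb; exists b => j jw.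
  by rewrite ltNge; apply/negP => bh; apply: H; exists j.
have H1 : forall j, aleph1_small (segment (h j)) by move=> j; apply: segsmall.
have /choice [Rf HR] := H1.
pose A j := segment (h j).
have Rtot : forall j x z, j < w -> A j x -> A j z -> x = z \/ Rf j x z \/ Rf j z x.
  by move=> j x z _; have [_ [_ [? _]]] := HR j; auto.
have [|y Hy] := @rec_exists _ _ wfT (set T) set0
  (fun i f => [set r | exists j, j <= i /\
      ismin (A j) (Rf j) (\bigcup_(k in segment i) f k) r]).
  move=> i f f' ff'.
  have -> : \bigcup_(k in segment i) f k = \bigcup_(k in segment i) f' k.
    by apply: eq_bigcupr => k ki; apply: ff'.
  by [].
have cov := @cover _ _ w hw1 hw2 A Rf y Rtot.
have {}cov : forall j, j < w -> A j `<=` \bigcup_(i in segment w) y i.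
  apply: cov.
    by move=> j x jw Ax; have [_ [_ [_ [_ ?]]]] := HR j; auto.
  move=> i j iw ji ex.
  have [|r [Ar Xr mr]] := @ismin_ex _ (A j) (Rf j) (\bigcup_(k in segment i) y k) _ ex.
    by have [_ [_ [_ [? _]]]] := HR j.
  exists r; split=> //; rewrite Hy; exists j; split=> //.
have cy : forall i, i < w -> countable (y i).
  move=> i iw.
  have : forall r, exists j, y i r -> j <= i /\
      ismin (A j) (Rf j) (\bigcup_(k in segment i) y k) r.
    move=> r; case: (pselect (y i r)) => yr; last by exists i.
    by move: yr; rewrite {1}Hy => -[j Hj]; exists j.
  move=> /choice [jr Hjr].
  apply: (@cnt_inj _ _ jr (y i) [set j | j <= i]); last exact: (cnt_le hw2 iw).
    move=> r1 r2 y1 y2 e.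
    have [_ m1] := Hjr r1 y1; have [_ m2] := Hjr r2 y2.
    rewrite e in m1; apply: (ismin_uniq _ m1 m2).
    move=> x z Ax Az; apply: (Rtot (jr r2) x z) => //.
    by apply: le_lt_trans iw; exact: (proj1 (Hjr r2 y2)).
  by move=> r yr; exact: (proj1 (Hjr r yr)).
apply: nT; apply: (@small_of_cover _ _ wfT w hw2 (fun i => y i `|` [set h i])).
  by move=> i iw; apply: cnt_U => //; apply: cy.
move=> t; have [j [jw tj]] := hb t.
move: tj; rewrite le_eqVlt => /orP [/eqP ->|tj]; first by exists j; split=> //; right.
have [i iw yit] := cov j jw t tj.
by exists i; split=> //; left.
Qed.

End B.

Theorem proposition1p5 (d : Order.disp_t) (T : orderType d)
  (hT : @is_omega2 d T) (S : set T) (s : T -> set (set T)) :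
  disjoint_stationary_sequence S s ->
  stationary ([set a | cof_omega1 a] `\` S).
Proof.
case: hT => wfT segsmall nT [Scof _ Ss Sdisj] C [Cunb Ccl].
apply: contrapT => Hno.
have HS : forall a, cof_omega1 a -> C a -> S a.
  move=> a ca Ca; apply: contrapT => nS; apply: Hno; exists a; split=> //.
have [w [hw1 hw2]] := exists_w wfT nT.
have /choice [cC HcC] : forall b, exists c, C c /\ b < c.
  by move=> b; have [c ? ?] := Cunb b; exists c.
have /choice [Rg HRg] := segsmall.
pose pickb (x : set T) : T := match pselect (exists b, S b /\ s b x) with
  left p => proj1_sig (cid p) | right _ => w end.
have pickbP : forall x, (exists b, S b /\ s b x) -> S (pickb x) /\ s (pickb x) x.
  by move=> x ex; rewrite /pickb; case: pselect => // p; exact: (proj2_sig (cid p)).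
pose bnd (h : T -> T) : T := proj1_sig (cid (bound wfT segsmall nT hw1 hw2 h)).
have bndP : forall h j, j < w -> h j < bnd h.
  by move=> h; exact: (proj2_sig (cid (bound wfT segsmall nT hw1 hw2 h))).
pose step (i : T) (g : T -> T * set T) : T * set T :=
  let x := \bigcup_(k in segment i) (g k).2 in
  let a := bnd (fun j => if j < i then cC (g j).1 else pickb x) in
  (a, [set r | exists j, j <= i /\ ismin (segment (if j < i then (g j).1 else a))
                 (Rg (if j < i then (g j).1 else a)) x r]).
have [|f Hf] := @rec_exists _ _ wfT _ (w, set0)
   (fun i g => step i (fun j => if j < i then g j else (w, set0))).
  move=> i h h' hh; congr (step i _); apply: funext => j.
  by case: ifP => // ji; rewrite hh.
pose al i := (f i).1.
pose y i := (f i).2.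
pose xx i := \bigcup_(k in segment i) y k.
have ex : forall i, \bigcup_(k in segment i) ((fun j => if j < i then f j else (w, set0)) k).2 = xx i.
  by move=> i; apply: eq_bigcupr => k /= ki; rewrite ki.
have Hal : forall i, al i = bnd (fun j => if j < i then cC (al j) else pickb (xx i)).
  move=> i; rewrite /al {1}Hf /step /= ex; congr bnd; apply: funext => j.
  by case: ifP => // ->.
have Hy : forall i r, y i r <-> exists j, j <= i /\ ismin (segment (al j)) (Rg (al j)) (xx i) r.
  move=> i r; rewrite /y {1}Hf /step /= ex.
  have -> : bnd (fun j => if j < i then cC (if j < i then f j else (w,set0)).1 else pickb (xx i)) = al i.
    by rewrite Hal; congr bnd; apply: funext => j; case: ifP => // ->.
  have e2 : forall j, j <= i ->
      (if j < i then (if j < i then f j else (w,set0)).1 else al i) = al j.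
    move=> j ji; case: ifP => [->//|/negbT]; rewrite -leNgt => ij.
    by have -> : j = i by apply/eqP; rewrite eq_le ji ij.
  split=> -[j [ji H]]; exists j; split=> //; first by rewrite -e2.
  by rewrite e2.
have Rtot : forall j x z, j < w -> segment (al j) x -> segment (al j) z ->
    x = z \/ Rg (al j) x z \/ Rg (al j) z x.
  by move=> j x z _; have [_ [_ [? _]]] := HRg (al j); auto.
have Rcnt : forall j x, j < w -> segment (al j) x ->
    countable [set u | segment (al j) u /\ Rg (al j) u x].
  by move=> j x _; have [_ [_ [_ [_ ?]]]] := HRg (al j); auto.
have P1 : forall i j, i < w -> j < i -> cC (al j) < al i.
  move=> i j iw ji; rewrite (Hal i).
  have := bndP (fun j => if j < i then cC (al j) else pickb (xx i)) j (lt_trans ji iw).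
  by rewrite /= ji.
have P2 : forall i, i < w -> (exists b, S b /\ s b (xx i)) ->
    exists b, [/\ S b, s b (xx i) & b < al i].
  move=> i iw ex'; exists (pickb (xx i)); have [? ?] := pickbP _ ex'; split=> //.
  rewrite (Hal i).
  have := bndP (fun j => if j < i then cC (al j) else pickb (xx i)) i iw.
  by rewrite /= ltxx.
have mono : forall i j, i < w -> j < i -> al j < al i.
  by move=> i j iw ji; apply: lt_trans (HcC (al j)).2 (P1 i j iw ji).
have mono_le : forall i j, i < w -> j <= i -> al j <= al i.
  move=> i j iw; rewrite le_eqVlt => /orP [/eqP ->//|ji].
  exact: ltW (mono i j iw ji).
have [al0 [Ual0 mal0]] := @wf_min _ _ wfT [set b | forall i, i < w -> al i < b]
   (bound wfT segsmall nT hw1 hw2 al).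
have Q2 : forall b, b < al0 -> exists i, i < w /\ b < al i.
  move=> b bl; apply: contrapT => H.
  suff : al0 <= b by rewrite leNgt bl.
  apply: mal0 => i iw; have [k [ik kw]] := nomax hw1 hw2 iw.
  apply: lt_le_trans (mono k i kw ik) _; rewrite leNgt; apply/negP => bk.
  by apply: H; exists k.
have i0 : exists i, i < w.
  apply: contrapT => H; apply: (hw1); apply: (@cnt_sub _ _ set0) => // i iw.
  by apply: H; exists i.
have cof : cof_omega1 al0.
  split.
    move=> [A [[Asub Acof] cA]].
    have /choice [ia Hia] : forall a, exists i, A a -> i < w /\ a < al i.
      move=> a; case: (pselect (A a)) => Aa; last by exists w.
      by have [i Hi] := Q2 a (Asub a Aa); exists i.
    have [|k [kw Hk]] := @bound_w _ _ w hw1 hw2 (ia @` A) _ (cnt_img ia cA).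
      by move=> _ [a Aa <-]; exact: (proj1 (Hia a Aa)).
    have [c Ac kc] := Acof (al k) (Ual0 k kw).
    have [iw ci] := Hia c Ac.
    have l : al (ia c) < al k by apply: mono => //; apply: Hk; exists c.
    by have := lt_le_trans (lt_trans ci l) kc; rewrite ltxx.
  exists (al @` segment w); split.
    split; first by move=> _ [i iw <-]; apply: Ual0.
    move=> b bl; have [i [iw bi]] := Q2 b bl.
    by exists (al i); [exists i | exact: ltW].
  apply: (small_lt wfT) => _ [j0 jw0 <-].
  apply: (@cnt_sub _ _ (al @` segment j0)); last by apply: cnt_img; apply: (hw2).
  move=> _ [[j jw <-] lj]; exists j => //.
  rewrite /segment /= ltNge; apply/negP => ij.
  by have := le_lt_trans (mono_le j j0 jw ij) lj; rewrite ltxx.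
have Cal : C al0.
  apply: Ccl; first by have [i iw] := i0; exists (al i); exact: Ual0.
  move=> b bl; have [i [iw bi]] := Q2 b bl; have [k [ik kw]] := nomax hw1 hw2 iw.
  exists (cC (al i)); first exact: (HcC _).1.
  split; first exact: lt_trans bi (HcC _).2.
  exact: lt_trans (P1 k i kw ik) (Ual0 k kw).
have Sal := HS al0 cof Cal.
have cov : forall j, j < w -> segment (al j) `<=` \bigcup_(i in segment w) y i.
  apply: (@cover _ _ w hw1 hw2 (fun j => segment (al j)) (fun j => Rg (al j)) y) => //.
  move=> i j iw ji ex'.
  have [|r [Ar Xr mr]] := @ismin_ex _ (segment (al j)) (Rg (al j)) (xx i) _ ex'.
    by have [_ [_ [_ [? _]]]] := HRg (al j).
  exists r; split=> //; apply/Hy; exists j; split=> //.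
have cov' : forall z, z < al0 -> exists2 k, k < w & y k z.
  move=> z zl; have [j [jw zj]] := Q2 z zl.
  by have [k kw ykz] := cov j jw z zj; exists k.
have cy : forall k, k < w -> countable (y k).
  move=> k kw; apply: (@cnt_sub _ _ [set r | exists j, j <= k /\
     ismin ((fun j => segment (al j)) j) ((fun j => Rg (al j)) j) (xx k) r]).
    by move=> r /Hy.
  by apply: (cnt_mins hw2) => //.
have cxx : forall i, i < w -> countable (xx i).
  move=> i iw; apply: bigcup_countable; first exact: (hw2).
  move=> k ki; apply: cy; exact: lt_trans ki iw.
have xxsub : forall i, i < w -> xx i `<=` segment al0.
  move=> i iw r [k ki ykr]; have [j [jk [Ar _ _]]] := (Hy k r).1 ykr.
  apply: lt_trans Ar (Ual0 j _).
  exact: le_lt_trans jk (lt_trans ki iw).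
pose c := [set X | exists2 i, i < w & X = xx i].
have clubc : club_P al0 c.
  split.
  - by move=> _ [i iw ->]; split; [exact: xxsub | exact: cxx].
  - move=> x0 [x0sub cx0].
    have /choice [kz Hkz] : forall z, exists k, x0 z -> k < w /\ y k z.
      move=> z; case: (pselect (x0 z)) => xz; last by exists w.
      by have [k kw ykz] := cov' z (x0sub z xz); exists k.
    have [|i [iw Hi]] := @bound_w _ _ w hw1 hw2 (kz @` x0) _ (cnt_img kz cx0).
      by move=> _ [z xz <-]; exact: (Hkz z xz).1.
    exists (xx i); first by exists i.
    move=> z xz; exists (kz z); last exact: (Hkz z xz).2.
    by apply: Hi; exists z.
  - move=> Y cY _.
    have /choice [idx Hidx] : forall n, exists i, i < w /\ Y n = xx i.
      by move=> n; have [i ? ?] := cY n; exists i.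
    have [|k [kw Hk]] := @bound_w _ _ w hw1 hw2 (range idx) _ (cnt_img idx (countableP _)).
      by move=> _ [n _ <-]; exact: (Hidx n).1.
    have hk : forall n, idx n <= k by move=> n; apply: ltW; apply: Hk; exists n.
    have [m0 [[m0w Hm0] mm0]] := @wf_min _ _ wfT [set m | m < w /\ forall n, idx n <= m]
       (ex_intro _ k (conj kw hk)).
    exists m0 => //; apply/seteqP; split.
      move=> z [n _ Ynz]; rewrite (Hidx n).2 in Ynz; case: Ynz => k' k'n yk'z.
      by exists k' => //; exact: lt_le_trans k'n (Hm0 n).
    move=> z [k' k'm yk'z].
    have [n l] : exists n, k' < idx n.
      apply: contrapT => H.
      have : m0 <= k'.
        apply: mm0; split; first exact: lt_trans k'm m0w.
        by move=> n; rewrite leNgt; apply/negP => l; apply: H; exists n.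
      by rewrite leNgt k'm.
    by exists n => //; rewrite (Hidx n).2; exists k'.
have [X [sX [i iw eX]]] := (Ss al0 Sal).2 c clubc.
subst X.
have [b [Sb sb bl]] := P2 i iw (ex_intro _ al0 (conj Sal sX)).
have := Sdisj b al0 Sb Sal (lt_trans bl (Ual0 i iw)).
by move/seteqP => [H _]; exact: (H (xx i) (conj sb sX)).
Qed.
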